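(* Let $S_{r,N}$ be an atomic exponential Puiseux semiring with $r\neq 1$. Then there exists $B\in\mathbb{N}$ such that for every $x\in S_{r,N}$ the set of lengths $\mathsf{L}(x)$ is an almost arithmetic progression with difference $|\mathsf{n}(r)-\mathsf{d}(r)|$ and bound $B$.
   Context: $\mathbb{N}=\{0,1,2,\dots\}$. A numerical monoid $N$ is an additive submonoid of $\mathbb{N}$ with finite complement in $\mathbb{N}$. For $r\in\mathbb{Q}_{>0}$ write $r=\mathsf{n}(r)/\mathsf{d}(r)$ with $\mathsf{n}(r),\mathsf{d}(r)$ coprime positive integers. The exponential Puiseux semiring $S_{r,N}$ is the additive submonoid of $\mathbb{Q}_{\ge0}$ generated by $\{r^k:k\in N\}$; if $r\in\mathbb{N}$ it equals $\mathbb{N}$; if $r\notin\mathbb{N}$ it is atomic iff $\mathsf{n}(r)>1$, with atoms $r^s$, $s\in N$. For an atomic monoid, $\mathsf{L}(x)$ is the set of lengths of factorizations of $x$ into atoms. For a positive integer $d$ and $B\in\mathbb{N}$, a set $L\subseteq\mathbb{Z}$ is an almost arithmetic progression (AAP) with difference $d$ and bound $B$ if $L=y+(L'\cup L^*\cup L'')\subseteq y+d\mathbb{Z}$ where $y\in\mathbb{Z}$, $L^*$ is a nonempty (possibly infinite) arithmetic progression with difference $d$ and $\min L^*=0$, $L'\subseteq[-B,-1]$, and $L''\subseteq\sup L^*+[1,B]$, with $L''=\emptyset$ if $L^*$ is infinite. *)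

(* Defs.v *)
From mathcomp Require Import all_boot all_order all_algebra.
Set Implicit Arguments. Unset Strict Implicit. Unset Printing Implicit Defensive.
Import Order.TTheory GRing.Theory Num.Theory.
Local Open Scope ring_scope.

Definition numerical_monoid (N : pred nat) : Prop :=
  [/\ N 0%N,
      (forall m n, N m -> N n -> N (m + n)%N)
    & exists c : nat, forall n, (c <= n)%N -> N n].

Definition S_rN (r : rat) (N : pred nat) (x : rat) : Prop :=
  exists s : seq nat, (forall k, k \in s -> N k) /\ x = \sum_(k <- s) r ^+ k.

(* Atoms of a submonoid M of (Q_{>=0}, +) (whose only unit is 0). *)
Definition is_atom (M : rat -> Prop) (a : rat) : Prop :=
  [/\ M a, a != 0 &
      forall b c, M b -> M c -> a = b + c -> b = 0 \/ c = 0].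

Definition atomic (M : rat -> Prop) : Prop :=
  forall x, M x -> x != 0 ->
    exists s : seq rat, (forall a, a \in s -> is_atom M a) /\ x = \sum_(a <- s) a.

Definition lengths (M : rat -> Prop) (x : rat) (z : int) : Prop :=
  exists s : seq rat, [/\ forall a, a \in s -> is_atom M a,
                          x = \sum_(a <- s) a & z = (size s)%:Z].

(* The arithmetic progression L* with difference d and min 0:
   {0, d, ..., l d} if ls = Some l, {0, d, 2d, ...} if ls = None. *)
Definition AP0 (d : nat) (ls : option nat) (z : int) : Prop :=
  exists j : nat, (match ls with Some l => (j <= l)%N | None => True end)
                  /\ z = (j * d)%N%:Z.

Definition AAP (d B : nat) (L : int -> Prop) : Prop :=
  exists (y : int) (Lp Lpp : int -> Prop) (ls : option nat),
    [/\ forall z, L z <-> (Lp (z - y) \/ AP0 d ls (z - y) \/ Lpp (z - y)),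
        forall z, L z -> (d%:Z %| z - y)%Z,
        forall z, Lp z -> - B%:Z <= z <= -1
      & forall z, Lpp z ->
          match ls with
          | Some l => (l * d)%N%:Z + 1 <= z <= (l * d)%N%:Z + B%:Z
          | None => false
          end].

(* Main.v *)
Require Import Defs.
From mathcomp Require Import all_boot all_order all_algebra.
From mathcomp Require Import zify ring lra.
From Stdlib Require Import Classical.
Import Order.TTheory GRing.Theory Num.Theory.
Local Open Scope ring_scope.

Definition vl (r : rat) (e : seq nat) : rat := \sum_(k <- e) r ^+ k.

Lemma vl_cat r e1 e2 : vl r (e1 ++ e2) = vl r e1 + vl r e2.
Proof. by rewrite /vl big_cat. Qed.

Lemma vl_cons r k e : vl r (k :: e) = r ^+ k + vl r e.
Proof. by rewrite /vl big_cons. Qed.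

Lemma vl_nseq r m k : vl r (nseq m k) = m%:R * r ^+ k.
Proof.
elim: m => [|m IH]; first by rewrite /vl big_nil mul0r.
by rewrite /= vl_cons IH mulrSr mulrDl mul1r addrC.
Qed.

Lemma vl_perm r e1 e2 : perm_eq e1 e2 -> vl r e1 = vl r e2.
Proof. by move=> H; rewrite /vl (perm_big _ H). Qed.

Lemma vl_ge0 r e : 0 <= r -> 0 <= vl r e.
Proof. by move=> hr; rewrite /vl sumr_ge0 // => i _; rewrite exprn_ge0. Qed.

Lemma vl_gt0 r e : 0 < r -> e != [::] -> 0 < vl r e.
Proof.
move=> hr; case: e => [//|k e] _; rewrite vl_cons.
by rewrite ltr_wpDr ?vl_ge0 ?ltW // exprn_gt0.
Qed.

Lemma extract (T : eqType) (a : T) m (e : seq T) :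
  (m <= count_mem a e)%N -> exists rest, perm_eq e (nseq m a ++ rest).
Proof.
elim: m e => [|m IH] e H; first by exists e.
have ae : a \in e by rewrite -has_pred1 has_count; lia.
have P := perm_to_rem ae.
have : (m <= count_mem a (rem a e))%N.
  by move: H; rewrite (permP P) /= eqxx; lia.
case/IH => rest Pr; exists rest.
apply: (perm_trans P) => /=; by rewrite perm_cons.
Qed.

Lemma term_le_val r e k : 0 <= r -> k \in e -> r ^+ k <= vl r e.
Proof.
move=> hr ke; rewrite (vl_perm r _ _ (perm_to_rem ke)) vl_cons.
by rewrite lerDl vl_ge0.
Qed.

Lemma allN_perm (N : pred nat) e1 e2 : perm_eq e1 e2 -> all N e1 = all N e2.
Proof. by move=> P; apply: eq_all_r; apply: perm_mem. Qed.

Definition rr (p q : nat) : rat := p%:R / q%:R.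
Definition fct (r : rat) (N : pred nat) (x : rat) (e : seq nat) :=
  all N e /\ x = vl r e.

Lemma PoszX' (a n : nat) : Posz (a ^ n) = (Posz a) ^+ n.
Proof. by elim: n => [|n IH] //; rewrite expnS exprS PoszM IH. Qed.

Fixpoint E (p q m : nat) : nat :=
  match m with 0 => 0%N | m'.+1 => (p * E p q m' + q ^ m')%N end.

Lemma E_id p q m :
  (p%:Z ^+ m - q%:Z ^+ m = (p%:Z - q%:Z) * (E p q m)%:Z).
Proof.
elim: m => [|m IH] /=; first by rewrite !expr0 subrr mulr0.
rewrite PoszD PoszM PoszX' /= !exprS.
have -> : p%:Z * p%:Z ^+ m - q%:Z * q%:Z ^+ m
   = p%:Z * (p%:Z ^+ m - q%:Z ^+ m) + (p%:Z - q%:Z) * q%:Z ^+ m by ring.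
rewrite IH; ring.
Qed.

Lemma E_pos p q m : (0 < m)%N -> (0 < q)%N -> (0 < E p q m)%N.
Proof.
case: m => [//|m] _ hq /=.
have : (0 < q ^ m)%N by rewrite expn_gt0 hq.
lia.
Qed.

Lemma E_mono p q s k : (p ^ k * E p q s <= E p q (s + k))%N.
Proof.
elim: k => [|k IH]; first by rewrite expn0 mul1n addn0.
rewrite addnS /= expnS -mulnA.
have := leq_mul (leqnn p) IH. lia.
Qed.

Lemma rrXq p q k : (0 < q)%N -> rr p q ^+ k * (q%:R) ^+ k = (p%:R) ^+ k.
Proof.
move=> hq; rewrite /rr -exprMn divfK //.
by rewrite pnatr_eq0 -lt0n.
Qed.

Lemma rr_step p q : (0 < q)%N -> q%:R * rr p q = p%:R.
Proof. by move=> hq; rewrite /rr mulrC divfK // pnatr_eq0 -lt0n. Qed.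

Lemma upmove p q (N : pred nat) c x e t :
  (0 < q)%N -> (forall n, (c <= n)%N -> N n) -> fct (rr p q) N x e ->
  (c <= t)%N -> (q <= count_mem t.+1 e)%N ->
  exists e', fct (rr p q) N x e' /\ (size e')%:Z = (size e)%:Z + p%:Z - q%:Z.
Proof.
move=> hq hN [aN ->] ct /extract [rest P].
exists (nseq p t ++ rest); split; last first.
  rewrite (perm_size P) !size_cat !size_nseq PoszD PoszD; ring.
split.
  rewrite all_cat (allN_perm _ _ _ P) all_cat in aN *.
  case/andP: aN => _ ->; rewrite andbT.
  by apply/allP => y; rewrite mem_nseq => /andP [_ /eqP ->]; apply: hN.
rewrite (vl_perm _ _ _ P) !vl_cat !vl_nseq; congr (_ + _).
by rewrite exprS mulrA rr_step.
Qed.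

Lemma fill_arith (p q ps qs pc qc Es Ec sr : int) :
  ps - qs = (p - q) * Es -> pc - qc = (p - q) * Ec ->
  sr + (ps * (Ec * (p * Ec)) - pc * (p * Ec * Es - 1))
     + (qc * (p * Ec * Es - 1) - p * (Ec - 1)) + q * (Ec - 1)
  = sr + qs * (Ec * (p * Ec)) + p - q.
Proof.
move=> h1 h2.
have -> : ps = qs + (p - q) * Es by rewrite -h1; ring.
have -> : pc = qc + (p - q) * Ec by rewrite -h2; ring.
ring.
Qed.

Definition Mb p q c := (q ^ c * (E p q c * (p * E p q c)))%N.

Lemma fill p q (N : pred nat) c x e s :
  (0 < p)%N -> (0 < q)%N -> N 0%N -> (forall n, (c <= n)%N -> N n) ->
  fct (rr p q) N x e -> (1 <= s <= c)%N -> (Mb p q c <= count_mem s e)%N ->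
  exists e', fct (rr p q) N x e' /\ (size e')%:Z = (size e)%:Z + p%:Z - q%:Z.
Proof.
move=> hp hq N0 hN [aN ->] /andP [s1 sc] hM.
set Ec := E p q c; set Es := E p q s.
have Ec1 : (0 < Ec)%N by apply: E_pos => //; lia.
have Es1 : (0 < Es)%N by apply: E_pos => //; lia.
have h2 : (p ^ c * Es <= p ^ s * Ec)%N.
  have := E_mono p q s (c - s); rewrite subnKC // -/Ec -/Es => H.
  have -> : (p ^ c = p ^ s * p ^ (c - s))%N by rewrite -expnD subnKC.
  rewrite -mulnA leq_mul2l H orbT //.
set T := (p * Ec)%N; set Y := (Ec * T)%N; set m' := (T * Es - 1)%N.
set j := (Ec - 1)%N.
have T1 : (0 < T)%N by rewrite /T muln_gt0 hp Ec1.
have h3 : (p ^ c * m' <= p ^ s * Y)%N.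
  rewrite /m' /Y mulnBr muln1.
  apply: (leq_trans (leq_subr _ _)).
  have := leq_mul (leqnn T) h2.
  move: (p ^ c)%N (p ^ s)%N => a b; nia.
have qc1 : (0 < q ^ c)%N by rewrite expn_gt0 hq.
have h4 : (p * j <= q ^ c * m')%N.
  have : (p * j <= m')%N.
    rewrite /m' /j /T mulnBr muln1.
    have : (p * Ec <= p * Ec * Es)%N by rewrite leq_pmulr.
    lia.
  move=> H; apply: (leq_trans H); by rewrite leq_pmull.
have h5 : (q ^ s * Y <= count_mem s e)%N.
  apply: leq_trans hM; rewrite /Mb leq_mul2r leq_pexp2l ?sc ?orbT //.
case/extract: h5 => rest P.
set n0 := (p ^ s * Y - p ^ c * m')%N.
exists (rest ++ nseq n0 0 ++ nseq (q ^ c * m' - p * j) c ++ nseq (q * j) c.+1).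
split; last first.
  rewrite (perm_size P) !size_cat !size_nseq !PoszD -!subzn //.
  rewrite !PoszM !PoszX'.
  rewrite addrA addrA.
  have := fill_arith p q (p%:Z ^+ s) (q%:Z ^+ s) (p%:Z ^+ c) (q%:Z ^+ c) Es Ec (size rest)
    (E_id p q s) (E_id p q c).
  rewrite /m' /j /Y /T -!subzn // ?PoszM; last by rewrite muln_gt0 T1 Es1.
  move=> ->; ring.
split.
  rewrite (allN_perm _ _ _ P) !all_cat in aN *.
  case/andP: aN => _ ->; rewrite /=.
  have allc : forall m k, N k -> all N (nseq m k).
    by move=> m k Nk; apply/allP => y; rewrite mem_nseq => /andP [_ /eqP ->].
  by rewrite !allc // hN.
rewrite (vl_perm _ _ _ P) !vl_cat !vl_nseq.
rewrite addrC; congr (_ + _).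
rewrite /n0 !natrB // !natrM !natrX.
have e1 : rr p q ^+ s * (q%:R) ^+ s = (p%:R) ^+ s by apply: rrXq.
have e2 : rr p q ^+ c * (q%:R) ^+ c = (p%:R) ^+ c by apply: rrXq.
have e3 : q%:R * rr p q = p%:R by apply: rr_step.
rewrite -e1 -e2 exprSr.
rewrite -e3.
ring.
Qed.

Lemma cancel_mod C C' P R R' q :
  (C * P + q * R = C' * P + q * R')%N -> coprime q P ->
  (C < q)%N -> (C' < q)%N -> C = C'.
Proof.
wlog le : C C' R R' / (C <= C')%N.
  move=> W H cop h1 h2; case: (leqP C C') => h.
    exact: (W C C' R R').
  symmetry; apply: (W C' C R' R (ltnW h)) => //; by rewrite H.
move=> H cop h1 h2.
have E1 : (q * R = (C' - C) * P + q * R')%N.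
  rewrite mulnBl; move: H; have := leq_mul le (leqnn P); lia.
have : (q %| (C' - C) * P)%N.
  by rewrite -(dvdn_addl _ (dvdn_mulr R' (dvdnn q))) -E1 dvdn_mulr.
rewrite Gauss_dvdl // => D.
case: (posnP (C' - C)) => h0; first lia.
have := dvdn_leq h0 D; lia.
Qed.

Lemma down_ind (P : nat -> Prop) K :
  (forall n, (K < n)%N -> P n) -> (forall n, P n.+1 -> P n) -> forall n, P n.
Proof.
move=> base step.
have : forall d n, (K < n + d)%N -> P n.
  elim=> [|d IH] n h; first by apply: base; rewrite addn0 in h.
  by apply: step; apply: IH; rewrite addSn -addnS.
by move=> H n; apply: (H K.+1); lia.
Qed.

Definition maxs (e : seq nat) := foldr maxn 0%N e.

Lemma maxs_ge e k : k \in e -> (k <= maxs e)%N.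
Proof.
elim: e => [//|a e IH]; rewrite inE /= => /orP [/eqP -> | /IH h].
  by rewrite leq_maxl.
by apply: (leq_trans h); rewrite leq_maxr.
Qed.

Lemma vl_filter r e (P : pred nat) :
  vl r e = vl r (filter P e) + vl r (filter (predC P) e).
Proof. by rewrite /vl !big_filter [LHS](bigID P). Qed.

Lemma count_filter_mem (P : pred nat) y e :
  count_mem y (filter P e) = if P y then count_mem y e else 0%N.
Proof.
rewrite count_filter; case: ifP => Py.
  by apply: eq_count => k /=; case: eqP => // ->; rewrite Py.
by apply/eqP; rewrite -leqn0 leqNgt -has_count; apply/hasP => -[k _ /andP [/eqP -> ]]; rewrite Py.
Qed.

Lemma perm_counts (e w : seq nat) :
  (forall y, count_mem y e = count_mem y w) -> perm_eq e w.
Proof. by move=> H; apply/allP => y _ /=; rewrite H. Qed.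

Definition Zs p q n (e : seq nat) := (\sum_(k <- e) p ^ k * q ^ (n - k))%N.

Lemma vl_scale p q n e : (0 < q)%N -> (forall k, k \in e -> (k <= n)%N) ->
  vl (rr p q) e * (q%:R) ^+ n = (Zs p q n e)%:R.
Proof.
move=> hq; elim: e => [|k e IH] H; first by rewrite /vl /Zs !big_nil mul0r.
rewrite vl_cons /Zs big_cons -/(Zs p q n e) natrD -IH; last first.
  by move=> y ye; apply: H; rewrite inE ye orbT.
have kn : (k <= n)%N by apply: H; rewrite inE eqxx.
rewrite mulrDl; congr (_ + _).
rewrite natrM !natrX -(rrXq p q k hq) -mulrA -exprD subnKC //.
Qed.

Lemma Zs_split p q n e : (forall k, k \in e -> (k <= n)%N) ->
  exists R, Zs p q n e = (count_mem n e * p ^ n + q * R)%N.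
Proof.
elim: e => [|k e IH] H; first by exists 0%N; rewrite /Zs big_nil /= muln0.
case: IH => [y ye|R HR]; first by apply: H; rewrite inE ye orbT.
have kn : (k <= n)%N by apply: H; rewrite inE eqxx.
rewrite /Zs big_cons -/(Zs p q n e) HR /=.
case: (eqVneq n k) => [<-|nk].
  by exists R; rewrite subnn expn0 muln1 /=; ring.
have kn' : (k < n)%N by rewrite ltn_neqAle kn eq_sym nk.
exists (p ^ k * q ^ (n - k).-1 + R)%N.
have -> : (q ^ (n - k) = q * q ^ (n - k).-1)%N.
  by rewrite -expnS prednK // subn_gt0.
rewrite add0n; ring.
Qed.

Lemma high_eq p q c e w : coprime p q -> (0 < q)%N ->
  vl (rr p q) e = vl (rr p q) w ->
  (forall t, (c < t)%N -> (count_mem t e < q)%N) ->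
  (forall t, (c < t)%N -> (count_mem t w < q)%N) ->
  forall t, (c < t)%N -> count_mem t e = count_mem t w.
Proof.
move=> cop hq hv he hw.
pose Q n := forall t, (n <= t)%N -> (c < t)%N -> count_mem t e = count_mem t w.
suff : forall n, Q n by move=> H t; apply: (H 0%N t).
apply: (down_ind Q (maxs (e ++ w))).
  move=> n hn t nt _.
  have ht : (maxs (e ++ w) < t)%N by lia.
  have /count_memPn -> : t \notin e.
    apply/negP => te; have := maxs_ge (e ++ w) t; rewrite mem_cat te; lia.
  have /count_memPn -> : t \notin w.
    apply/negP => tw; have := maxs_ge (e ++ w) t; rewrite mem_cat tw orbT; lia.
  by [].
move=> n IH t nt ct; rewrite /Q in IH.
case: (ltnP n t) => nt'; first by apply: IH.
have tn : t = n by apply/eqP; rewrite eqn_leq nt nt'.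
subst t.
pose Pl := fun k : nat => (k <= n)%N.
have hperm : perm_eq (filter (predC Pl) e) (filter (predC Pl) w).
  apply: perm_counts => y; rewrite !count_filter_mem /= /Pl.
  case: (leqP y n) => ny //=; apply: (IH y) => //; lia.
have hv1 : vl (rr p q) (filter Pl e) = vl (rr p q) (filter Pl w).
  move: hv; rewrite (vl_filter _ e Pl) (vl_filter _ w Pl) (vl_perm _ _ _ hperm).
  by move/addIr.
have le1 : forall s k, k \in filter Pl s -> (k <= n)%N.
  by move=> s k; rewrite mem_filter => /andP [].
have := vl_scale p q n (filter Pl e) hq (le1 e).
have := vl_scale p q n (filter Pl w) hq (le1 w).
rewrite hv1 => -> /eqP; rewrite eqr_nat => /eqP HZ.
case: (Zs_split p q n (filter Pl e) (le1 e)) => R1 H1.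
case: (Zs_split p q n (filter Pl w) (le1 w)) => R2 H2.
move: HZ; rewrite H1 H2 !count_filter_mem /Pl leqnn => HZ.
apply: (cancel_mod _ _ _ _ _ _ (esym HZ)).
- by rewrite coprimeXr // coprime_sym.
- by apply: he.
- by apply: hw.
Qed.

Lemma sum_count (F : nat -> rat) (e : seq nat) n :
  (forall k, k \in e -> (k < n)%N) ->
  \sum_(k <- e) F k = \sum_(s < n) (count_mem (s : nat) e)%:R * F s.
Proof.
elim: e => [|k e IH] H.
  by rewrite big_nil big1 // => i _; rewrite /= mul0r.
rewrite big_cons IH; last by move=> y ye; apply: H; rewrite inE ye orbT.
have kn : (k < n)%N by apply: H; rewrite inE eqxx.
rewrite [RHS](eq_bigr (fun s : 'I_n => (k == s)%:R * F s + (count_mem (s : nat) e)%:R * F s)); last first.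
  by move=> i _ /=; rewrite natrD mulrDl.
rewrite big_split /=; congr (_ + _).
rewrite (bigD1 (Ordinal kn)) //= eqxx mul1r big1 ?addr0 // => i /negbTE ik.
case: eqP => [ki|_]; last by rewrite mul0r.
by move: ik; rewrite -(inj_eq val_inj) /= -ki eqxx.
Qed.

Lemma size_sum (e : seq nat) : (size e)%:R = \sum_(k <- e) (1 : rat).
Proof.
elim: e => [|k e IH]; first by rewrite big_nil.
by rewrite big_cons /= -IH -add1n natrD addrC.
Qed.

Definition Bb p q c := (c.+1 * Mb p q c * p ^ c)%N.

Definition stuck p q c e :=
  (forall t, (c < t)%N -> (count_mem t e < q)%N) /\
  (forall s, (1 <= s)%N -> (s <= c)%N -> (count_mem s e < Mb p q c)%N).

Lemma split_parts p q c e w : coprime p q -> (0 < q)%N ->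
  vl (rr p q) e = vl (rr p q) w ->
  (forall t, (c < t)%N -> (count_mem t e < q)%N) ->
  (forall t, (c < t)%N -> (count_mem t w < q)%N) ->
  vl (rr p q) (filter (fun k => (k <= c)%N) e) = vl (rr p q) (filter (fun k => (k <= c)%N) w)
  /\ (size e = size (filter (fun k => (k <= c)%N) e) + size (filter (predC (fun k => (k <= c)%N)) e))%N
  /\ (size w = size (filter (fun k => (k <= c)%N) w) + size (filter (predC (fun k => (k <= c)%N)) e))%N.
Proof.
move=> cop hq hv he hw.
pose Pl := fun k : nat => (k <= c)%N.
have heq := high_eq p q c e w cop hq hv he hw.
have hperm : perm_eq (filter (predC Pl) e) (filter (predC Pl) w).
  apply: perm_counts => y; rewrite !count_filter_mem /= /Pl.
  case: (leqP y c) => ny //=; apply: heq; lia.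
split.
  move: hv; rewrite (vl_filter _ e Pl) (vl_filter _ w Pl) (vl_perm _ _ _ hperm).
  by move/addIr.
split.
  by rewrite -size_cat (perm_size (permEl (perm_filterC Pl e))).
by rewrite (perm_size hperm) -size_cat (perm_size (permEl (perm_filterC Pl w))).
Qed.

Lemma low_term_bound p q c e s : (0 < q)%N -> (0 < p)%N ->
  stuck p q c e -> (s <= c)%N ->
  ((count_mem s e)%:R <= (count_mem s e)%:R * rr p q ^+ s + (Mb p q c * p ^ c)%:R) /\
  ((q <= p)%N -> (count_mem s e)%:R * rr p q ^+ s <= (count_mem s e)%:R + (Mb p q c * p ^ c)%:R).
Proof.
move=> hq hp [_ hs] sc.
have r0 : 0 <= rr p q by rewrite /rr divr_ge0 ?ler0n.
have pc1 : (1 <= p ^ c)%N by rewrite expn_gt0 hp.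
case: (posnP s) => [->|s1].
  rewrite expr0 mulr1; split; first by rewrite lerDl ler0n.
  by move=> _; rewrite lerDl ler0n.
have cM := hs s s1 sc.
have cM' : ((count_mem s e)%:R <= (Mb p q c * p ^ c)%:R :> rat).
  rewrite ler_nat; have := leq_mul (ltnW cM) pc1; rewrite muln1 //.
split.
  apply: (le_trans cM'); rewrite lerDr mulr_ge0 ?exprn_ge0 ?ler0n //.
move=> qp.
have rle : rr p q <= p%:R.
  rewrite /rr ler_pdivrMr ?ltr0n // ler_peMr ?ler0n // ler1n; exact: hq.
have rsp : rr p q ^+ s <= (p ^ c)%:R.
  apply: (@le_trans _ _ (p%:R ^+ s)).
    have r0' : rr p q \in Num.nneg by rewrite nnegrE.
    have p0' : (p%:R : rat) \in Num.nneg by rewrite nnegrE ler0n.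
    exact: (lerXn2r s r0' p0' rle).
  by rewrite -natrX ler_nat leq_pexp2l.
apply: (le_trans _ (ler_wpDl (ler0n _ _) (lexx _))).
rewrite natrM; apply: ler_pM; rewrite ?ler0n ?exprn_ge0 //.
by rewrite ler_nat ltnW.
Qed.

Lemma vl_le_size r e : 0 <= r -> r <= 1 -> vl r e <= (size e)%:R.
Proof.
move=> r0 r1; rewrite size_sum /vl; apply: ler_sum => k _.
exact: exprn_ile1.
Qed.

Lemma size_le_vl r e : 1 <= r -> (size e)%:R <= vl r e.
Proof.
move=> r1; rewrite size_sum /vl; apply: ler_sum => k _.
exact: exprn_ege1.
Qed.

Lemma rr_ge0 p q : 0 <= rr p q.
Proof. by rewrite /rr divr_ge0 ?ler0n. Qed.

Lemma rr_le1 p q : (0 < q)%N -> (p <= q)%N -> rr p q <= 1.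
Proof. by move=> hq pq; rewrite /rr ler_pdivrMr ?ltr0n // mul1r ler_nat. Qed.

Lemma rr_ge1 p q : (0 < q)%N -> (q <= p)%N -> 1 <= rr p q.
Proof. by move=> hq pq; rewrite /rr ler_pdivlMr ?ltr0n // mul1r ler_nat. Qed.

Lemma low_sums p q c e : (0 < q)%N -> (0 < p)%N -> stuck p q c e ->
  let el := filter (fun k => (k <= c)%N) e in
  ((size el)%:R <= vl (rr p q) el + (Bb p q c)%:R) /\
  ((q <= p)%N -> vl (rr p q) el <= (size el)%:R + (Bb p q c)%:R).
Proof.
move=> hq hp st el.
have ltc : forall k, k \in el -> (k < c.+1)%N.
  by move=> k; rewrite mem_filter ltnS => /andP [].
have cnt : forall s : 'I_c.+1, count_mem (s : nat) el = count_mem (s : nat) e.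
  by move=> s; rewrite count_filter_mem -ltnS ltn_ord.
rewrite size_sum /vl !(sum_count _ el c.+1 ltc).
have Bs : (Bb p q c)%:R = \sum_(s < c.+1) ((Mb p q c * p ^ c)%:R : rat).
  by rewrite sumr_const card_ord /Bb -mulnA natrM mulr_natl.
rewrite Bs -!big_split /=; split.
  apply: ler_sum => s _; rewrite cnt mulr1.
  by case: (low_term_bound p q c e s hq hp st (ltnSE (ltn_ord s))).
move=> qp; apply: ler_sum => s _; rewrite cnt mulr1.
by case: (low_term_bound p q c e s hq hp st (ltnSE (ltn_ord s))) => _ ->.
Qed.

Lemma bound_main p q c e w : coprime p q -> (0 < q)%N -> (0 < p)%N ->
  vl (rr p q) e = vl (rr p q) w -> stuck p q c e ->
  (forall t, (c < t)%N -> (count_mem t w < q)%N) ->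
  ((p <= q)%N -> (size e <= size w + Bb p q c)%N) /\
  ((q <= p)%N -> (size w <= size e + Bb p q c)%N).
Proof.
move=> cop hq hp hv st hw.
have [hl [se sw]] := split_parts p q c e w cop hq hv st.1 hw.
have [l1 l2] := low_sums p q c e hq hp st.
rewrite se sw; split => pq.
  rewrite -addnA [(_ + Bb _ _ _)%N]addnC addnA leq_add2r -(ler_nat rat).
  apply: (le_trans l1); rewrite natrD lerD2r hl.
  by apply: vl_le_size; [exact: rr_ge0 | exact: rr_le1].
rewrite -addnA [(_ + Bb _ _ _)%N]addnC addnA leq_add2r -(ler_nat rat).
rewrite natrD; apply: le_trans (l2 pq); rewrite hl.
exact/size_le_vl/rr_ge1.
Qed.

Lemma step p q (N : pred nat) c x e :
  (0 < p)%N -> (0 < q)%N -> N 0%N -> (forall n, (c <= n)%N -> N n) ->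
  fct (rr p q) N x e ->
  (exists e', fct (rr p q) N x e' /\ (size e')%:Z = (size e)%:Z + p%:Z - q%:Z)
  \/ stuck p q c e.
Proof.
move=> hp hq N0 hN fe.
case: (classic (exists t, (c < t)%N /\ (q <= count_mem t e)%N)) => [[t [ct qt]]|nt].
  left; case: t ct qt => [//|t] ct qt.
  exact: (upmove p q N c x e t hq hN fe ct qt).
case: (classic (exists s, (1 <= s <= c)%N /\ (Mb p q c <= count_mem s e)%N)) => [[s [sc ms]]|ns].
  left; exact: (fill p q N c x e s hp hq N0 hN fe sc ms).
right; split.
  move=> t ct; rewrite ltnNge; apply/negP => qt; apply: nt; by exists t.
move=> s s1 sc; rewrite ltnNge; apply/negP => ms; apply: ns; exists s.
by rewrite s1 sc.
Qed.

Lemma max_nat (P : nat -> Prop) B : (exists n, P n) -> (forall n, P n -> (n <= B)%N) ->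
  exists m, P m /\ forall n, P n -> (n <= m)%N.
Proof.
elim: B => [|B IH] [n0 Pn0] H.
  exists n0; split => // n Pn; have := H n Pn; have := H n0 Pn0; lia.
case: (classic (P B.+1)) => PB.
  by exists B.+1; split.
apply: IH; first by exists n0.
move=> n Pn; have := H n Pn; rewrite leq_eqVlt => /orP [/eqP E|//].
by subst n.
Qed.

Lemma min_nat (P : nat -> Prop) : (exists n, P n) ->
  exists m, P m /\ forall n, P n -> (m <= n)%N.
Proof.
move=> [n0 Pn0]; apply: NNPP => H.
have : forall k n, (n <= k)%N -> ~ P n.
  elim=> [|k IH] n nk Pn.
    apply: H; exists n; split => // m _; lia.
  case: (leqP n k) => [nk'|kn]; first exact: (IH n nk' Pn).
  apply: H; exists n; split => // m Pm; rewrite leqNgt; apply/negP => mn.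
  apply: (IH m) => //; lia.
by move=> /(_ n0 n0 (leqnn n0)).
Qed.

Definition Lf p q N x l := exists e, fct (rr p q) N x e /\ size e = l.

Lemma struct_gt p q (N : pred nat) c x :
  coprime p q -> (0 < q)%N -> (q < p)%N -> N 0%N -> (forall n, (c <= n)%N -> N n) ->
  (exists l, Lf p q N x l) ->
  exists lmax, Lf p q N x lmax /\ (forall l, Lf p q N x l -> (l <= lmax)%N) /\
    forall l, Lf p q N x l -> (l + Bb p q c < lmax)%N -> Lf p q N x (l + (p - q))%N.
Proof.
move=> cop hq qp N0 hN ex.
have hp : (0 < p)%N by lia.
have bnd : forall l, Lf p q N x l -> (l <= Num.Def.archi_bound x)%N.
  move=> l [e [[_ xe] <-]].
  have x0 : 0 <= x by rewrite xe; apply: vl_ge0; apply: rr_ge0.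
  suff : ((size e)%:R < (Num.Def.archi_bound x)%:R :> rat) by rewrite ltr_nat => /ltnW.
  apply: le_lt_trans (archi_boundP x0); rewrite xe.
  by apply: size_le_vl; apply: rr_ge1 => //; exact: ltnW.
have [lmax [Lm Hm]] := max_nat _ _ ex bnd.
exists lmax; split => //; split => // l [e [fe <-]] lt.
case: (step p q N c x e hp hq N0 hN fe) => [[e' [fe' se']]|st].
  exists e'; split => //; move: se'; lia.
exfalso.
case: Lm => w [fw sw].
have hw : forall t, (c < t)%N -> (count_mem t w < q)%N.
  move=> t ct; rewrite ltnNge; apply/negP => qt.
  case: t ct qt => [//|t] ct qt.
  have [w' [fw' sw']] := upmove p q N c x w t hq hN fw ct qt.
  have := Hm (size w') (ex_intro _ w' (conj fw' erefl)).
  move: sw'; rewrite sw; lia.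
have hv : vl (rr p q) e = vl (rr p q) w by rewrite -fe.2 -fw.2.
have [_ H2] := bound_main p q c e w cop hq hp hv st hw.
have := H2 (ltnW qp); lia.
Qed.

Lemma struct_lt p q (N : pred nat) c x :
  coprime p q -> (0 < p)%N -> (p < q)%N -> N 0%N -> (forall n, (c <= n)%N -> N n) ->
  (exists l, Lf p q N x l) ->
  exists lmin, Lf p q N x lmin /\ (forall l, Lf p q N x l -> (lmin <= l)%N) /\
    forall l, Lf p q N x l -> (lmin + Bb p q c < l)%N ->
      (q - p <= l)%N /\ Lf p q N x (l - (q - p))%N.
Proof.
move=> cop hp pq N0 hN ex.
have hq : (0 < q)%N by lia.
have [lmin [Lm Hm]] := min_nat _ ex.
exists lmin; split => //; split => // l [e [fe <-]] lt.
case: (step p q N c x e hp hq N0 hN fe) => [[e' [fe' se']]|st].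
  split; first by move: se'; lia.
  exists e'; split => //; move: se'; lia.
exfalso.
case: Lm => w [fw sw].
have hw : forall t, (c < t)%N -> (count_mem t w < q)%N.
  move=> t ct; rewrite ltnNge; apply/negP => qt.
  case: t ct qt => [//|t] ct qt.
  have [w' [fw' sw']] := upmove p q N c x w t hq hN fw ct qt.
  have := Hm (size w') (ex_intro _ w' (conj fw' erefl)).
  move: sw'; rewrite sw; lia.
have hv : vl (rr p q) e = vl (rr p q) w by rewrite -fe.2 -fw.2.
have [H1 _] := bound_main p q c e w cop hq hp hv st hw.
have := H1 (ltnW pq); lia.
Qed.

Lemma Zs_cong p q K e : (forall k, k \in e -> (k <= K)%N) ->
  exists A : int, (Zs p q K e)%:Z = (size e)%:Z * q%:Z ^+ K + (p%:Z - q%:Z) * A.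
Proof.
elim: e => [|k e IH] H; first by exists 0; rewrite /Zs big_nil /= mul0r mulr0 addr0.
case: IH => [y ye|A HA]; first by apply: H; rewrite inE ye orbT.
have kK : (k <= K)%N by apply: H; rewrite inE eqxx.
exists ((E p q k)%:Z * q%:Z ^+ (K - k) + A).
rewrite /Zs big_cons -/(Zs p q K e) PoszD HA PoszM !PoszX' /=.
have Ek := E_id p q k.
have -> : p%:Z ^+ k = q%:Z ^+ k + (p%:Z - q%:Z) * (E p q k)%:Z by rewrite -Ek; ring.
have -> : q%:Z ^+ K = q%:Z ^+ k * q%:Z ^+ (K - k) by rewrite -exprD subnKC.
rewrite -add1n PoszD; ring.
Qed.

Lemma cong p q e e' : coprime p q -> (0 < q)%N ->
  vl (rr p q) e = vl (rr p q) e' ->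
  ((p%:Z - q%:Z) %| (size e)%:Z - (size e')%:Z)%Z.
Proof.
move=> cop hq hv.
set K := maxs (e ++ e').
have le1 : forall k, k \in e -> (k <= K)%N.
  by move=> k ke; apply: maxs_ge; rewrite mem_cat ke.
have le2 : forall k, k \in e' -> (k <= K)%N.
  by move=> k ke; apply: maxs_ge; rewrite mem_cat ke orbT.
have := vl_scale p q K e hq le1; have := vl_scale p q K e' hq le2.
rewrite hv => -> /eqP; rewrite eqr_nat => /eqP HZ.
have [A1 H1] := Zs_cong p q K e le1.
have [A2 H2] := Zs_cong p q K e' le2.
have cz : coprimez (p%:Z - q%:Z) (q%:Z ^+ K).
  apply: coprimezXr; rewrite coprimez_sym /coprimez.
  have -> : p%:Z - q%:Z = (-1) * q%:Z + p%:Z by ring.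
  rewrite gcdzMDl -/(coprimez _ _) coprimezE /= coprime_sym //.
rewrite -(Gauss_dvdzl _ cz).
have -> : ((size e)%:Z - (size e')%:Z) * q%:Z ^+ K = (p%:Z - q%:Z) * (A2 - A1).
  have : (Zs p q K e)%:Z = (Zs p q K e')%:Z by rewrite HZ.
  rewrite H1 H2 => HH.
  have : ((size e)%:Z - (size e')%:Z) * q%:Z ^+ K - (p%:Z - q%:Z) * (A2 - A1)
     = ((size e)%:Z * q%:Z ^+ K + (p%:Z - q%:Z) * A1) - ((size e')%:Z * q%:Z ^+ K + (p%:Z - q%:Z) * A2)
    by ring.
  by rewrite HH subrr => /eqP; rewrite subr_eq0 => /eqP.
by rewrite dvdz_mulr.
Qed.

Lemma cong_nat d a b : (d%:Z %| a%:Z - b%:Z)%Z -> (b <= a)%N ->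
  exists j, a = (b + j * d)%N.
Proof.
move=> H ba; move: H; rewrite (subzn ba) dvdzE /= => /divnK H.
by exists ((a - b) %/ d)%N; rewrite H subnKC.
Qed.

Definition Lz (Lf : nat -> Prop) (z : int) := exists l, z = l%:Z /\ Lf l.

Lemma Lz_nat Lf z : Lz Lf z -> exists l, z = l%:Z /\ Lf l.
Proof. by []. Qed.

Lemma aap_gt (Lf : nat -> Prop) d B lmin lmax :
  (0 < d)%N ->
  (forall a b, Lf a -> Lf b -> (d%:Z %| a%:Z - b%:Z)%Z) ->
  Lf lmin -> (forall l, Lf l -> (lmin <= l)%N) ->
  Lf lmax -> (forall l, Lf l -> (l <= lmax)%N) ->
  (forall l, Lf l -> (l + B < lmax)%N -> Lf (l + d)%N) ->
  AAP d B (Lz Lf).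
Proof.
move=> d0 cg Lmin Hmin Lmax Hmax st.
have ex0 : exists j, (lmax <= lmin + j * d + B)%N by exists lmax; nia.
have [l0 [P0 H0]] := min_nat (fun j => (lmax <= lmin + j * d + B)%N) ex0.
have ap : forall j, (j <= l0)%N -> Lf (lmin + j * d)%N.
  elim=> [|j IH] jl; first by rewrite mul0n addn0.
  have := st _ (IH (ltnW jl)).
  have : ~ (lmax <= lmin + j * d + B)%N by move=> h; have := H0 _ h; lia.
  move=> nh h; have -> : (lmin + j.+1 * d = lmin + j * d + d)%N by rewrite mulSn; lia.
  by apply: h; lia.
exists (lmin%:Z), (fun _ => False), (fun z => Lz Lf (z + lmin%:Z) /\ (l0 * d)%N%:Z < z), (Some l0).
split.
- move=> z; split.
  + move=> [l [-> Ll]].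
    have [j Hj] := cong_nat d l lmin (cg _ _ Ll Lmin) (Hmin _ Ll).
    case: (leqP j l0) => jl.
      right; left; exists j; split => //; rewrite Hj PoszD; ring.
    right; right; split; first by exists l; split => //; ring.
    rewrite Hj PoszD addrC addKr ltz_nat ltn_mul2r d0 //.
  + case=> [//|[[j [jl Hj]]|[[l [Hl Ll]] _]]].
      exists (lmin + j * d)%N; split; last by apply: ap.
      by rewrite PoszD -Hj; ring.
    by exists l; split => //; rewrite -Hl; ring.
- move=> z [l [-> Ll]]; exact: cg.
- by [].
- move=> z [[l [Hl Ll]] lt].
  have h1 := Hmax _ Ll.
  have hz : z = l%:Z - lmin%:Z by rewrite -Hl; ring.
  move: P0 lt; set w := (l0 * d)%N => P0 lt.
  apply/andP; split; lia.
Qed.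

Lemma aap_lt (Lf : nat -> Prop) d B lmin :
  (0 < d)%N ->
  (forall a b, Lf a -> Lf b -> (d%:Z %| a%:Z - b%:Z)%Z) ->
  Lf lmin -> (forall l, Lf l -> (lmin <= l)%N) ->
  (forall l, Lf l -> (lmin + B < l)%N -> (d <= l)%N /\ Lf (l - d)%N) ->
  AAP d B (Lz Lf).
Proof.
move=> d0 cg Lmin Hmin st.
case: (classic (exists l, Lf l /\ (lmin + B < l + d)%N)) => [ex|nex]; last first.
  have Hb : forall l, Lf l -> (l + d <= lmin + B)%N.
    move=> l Ll; rewrite leqNgt; apply/negP => h; apply: nex; by exists l.
  exists (lmin%:Z), (fun _ => False), (fun z => Lz Lf (z + lmin%:Z) /\ 0 < z), (Some 0%N).
  split.
  - move=> z; split.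
    + move=> [l [-> Ll]]; have := Hmin _ Ll; rewrite leq_eqVlt => /orP [/eqP E|lt].
        right; left; exists 0%N; split => //; rewrite E; ring.
      right; right; split; first by exists l; split => //; ring.
      lia.
    + case=> [//|[[j [jl Hj]]|[[l [Hl Ll]] _]]].
        exists lmin; split => //; move: jl Hj; rewrite leqn0 => /eqP ->; rewrite mul0n => Hj.
        by apply/eqP; rewrite -subr_eq0 Hj.
      by exists l; split => //; rewrite -Hl; ring.
  - move=> z [l [-> Ll]]; exact: cg.
  - by [].
  - move=> z [[l [Hl Ll]] lt].
    have h1 := Hb _ Ll.
    have hz : z = l%:Z - lmin%:Z by rewrite -Hl; ring.
    rewrite mul0n; apply/andP; split; lia.
have [y [[Ly Ty] Hy]] := min_nat _ ex.
have yT : (y <= lmin + B)%N.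
  rewrite leqNgt; apply/negP => yt.
  have [dy Lyd] := st _ Ly yt.
  have h : (lmin + B < y - d + d)%N by lia.
  have := Hy (y - d)%N (conj Lyd h); lia.
have down : forall k, Lf (y + k * d)%N -> forall j, (j <= k)%N -> Lf (y + j * d)%N.
  elim=> [|k IH] Lk j jk; first by move: jk; rewrite leqn0 => /eqP ->.
  case: (eqVneq j k.+1) => [-> //|jk'].
  apply: IH => //; last by lia.
  have hk : (lmin + B < y + k.+1 * d)%N by nia.
  have [_ h] := st _ Lk hk.
  by move: h; have -> : (y + k.+1 * d - d = y + k * d)%N by rewrite mulSn; nia.
have ge_y : forall l, Lf l -> (y <= l)%N -> exists k, l = (y + k * d)%N.
  move=> l Ll yl; exact: (cong_nat d l y (cg _ _ Ll Ly) yl).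
case: (classic (exists M, forall l, Lf l -> (l <= M)%N)) => [[M HM]|unb].
  have [lmax [Lmax Hmax]] := max_nat _ _ (ex_intro _ y Ly) HM.
  have [l0 Hl0] := ge_y _ Lmax (Hmax _ Ly).
  exists (y%:Z), (fun z => Lz Lf (z + y%:Z) /\ z < 0), (fun _ => False), (Some l0).
  split.
  - move=> z; split.
    + move=> [l [-> Ll]]; case: (ltnP l y) => ly.
        left; split; first by exists l; split => //; ring.
        lia.
      have [k Hk] := ge_y _ Ll ly.
      right; left; exists k; split; last by rewrite Hk PoszD; ring.
      have := Hmax _ Ll; rewrite Hk Hl0 leq_add2l leq_pmul2r //.
    + case=> [[[l [Hl Ll]] _]|[[j [jl Hj]]|//]].
        by exists l; split => //; rewrite -Hl; ring.
      exists (y + j * d)%N; split; last by apply: (down l0) => //; rewrite -Hl0.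
      by rewrite PoszD -Hj; ring.
  - move=> z [l [-> Ll]]; exact: cg.
  - move=> z [[l [Hl Ll]] lt].
    have h1 := Hmin _ Ll.
    have hz : z = l%:Z - y%:Z by rewrite -Hl; ring.
    apply/andP; split; lia.
  - by [].
exists (y%:Z), (fun z => Lz Lf (z + y%:Z) /\ z < 0), (fun _ => False), None.
split.
- move=> z; split.
  + move=> [l [-> Ll]]; case: (ltnP l y) => ly.
      left; split; first by exists l; split => //; ring.
      lia.
    have [k Hk] := ge_y _ Ll ly.
    right; left; exists k; split; last by rewrite Hk PoszD; ring.
    by [].
  + case=> [[[l [Hl Ll]] _]|[[j [_ Hj]]|//]].
      by exists l; split => //; rewrite -Hl; ring.
    exists (y + j * d)%N; split; last first.
      have : exists l, Lf l /\ (y + j * d <= l)%N.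
        apply: NNPP => H; apply: unb; exists (y + j * d)%N => l Ll.
        rewrite leqNgt; apply/negP => lt; apply: H; exists l; split => //; lia.
      case=> l [Ll le].
      have yl : (y <= l)%N by lia.
      have [k Hk] := ge_y _ Ll yl.
      apply: (down k); first by rewrite -Hk.
      move: le; rewrite Hk leq_add2l leq_pmul2r //.
    by rewrite PoszD -Hj; ring.
- move=> z [l [-> Ll]]; exact: cg.
- move=> z [[l [Hl Ll]] lt].
  have h1 := Hmin _ Ll.
  have hz : z = l%:Z - y%:Z by rewrite -Hl; ring.
  apply/andP; split; lia.
- by [].
Qed.

Lemma Zs_split0 a b K J : (forall k, k \in J -> (k <= K)%N) ->
  exists R, Zs a b K J = (count_mem 0%N J * b ^ K + a * R)%N.
Proof.
elim: J => [|k J IH] H; first by exists 0%N; rewrite /Zs big_nil /= muln0.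
case: IH => [y yJ|R HR]; first by apply: H; rewrite inE yJ orbT.
rewrite /Zs big_cons -/(Zs a b K J) HR /=.
case: k H => [|k] H.
  by exists R; rewrite expn0 mul1n subn0 /=; ring.
exists (a ^ k * b ^ (K - k.+1) + R)%N; rewrite expnS /=; ring.
Qed.

Lemma vl_one a b J : coprime a b -> (1 < a)%N -> (0 < b)%N ->
  vl (rr a b) J = 1 -> size J = 1%N.
Proof.
move=> cop a1 b0 hv.
set K := maxs J.
have le1 : forall k, k \in J -> (k <= K)%N by move=> k kJ; apply: maxs_ge.
have := vl_scale a b K J b0 le1; rewrite hv mul1r -natrX => /eqP.
rewrite eqr_nat => /eqP HZ.
have [R HR] := Zs_split0 a b K J le1.
have c0 : (0 < count_mem 0%N J)%N.
  rewrite lt0n; apply/negP => /eqP c0.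
  move: HR; rewrite -HZ c0 mul0n add0n => HR.
  have : (a %| b ^ K)%N by rewrite HR dvdn_mulr.
  have cK : coprime a (b ^ K) by rewrite coprimeXr.
  move=> D; move: cK; rewrite /coprime; move/gcdn_idPl: D => ->; lia.
have J0 : 0%N \in J by rewrite -has_pred1 has_count.
have P := perm_to_rem J0.
move: hv; rewrite (vl_perm _ _ _ P) vl_cons expr0 => hv.
have h : vl (rr a b) (rem 0%N J) = 0 by apply: (@addrI _ 1); rewrite addr0.
rewrite (perm_size P) /=.
case E : (rem 0%N J) h => [//|k s] h.
have : 0 < vl (rr a b) (k :: s) by apply: vl_gt0 => //; rewrite /rr divr_gt0 ?ltr0n //; lia.
by rewrite h ltxx.
Qed.

Lemma vl_map_scale r r' r0 f e :
  (forall k, k \in e -> r ^+ (f k) * r0 = r' ^+ k) ->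
  vl r (map f e) * r0 = vl r' e.
Proof.
move=> H; rewrite /vl big_map mulr_suml big_seq [RHS]big_seq.
by apply: eq_bigr => k ke; apply: H.
Qed.

Lemma rr_gt0 p q : (0 < p)%N -> (0 < q)%N -> 0 < rr p q.
Proof. by move=> hp hq; rewrite /rr divr_gt0 ?ltr0n. Qed.

Lemma vl_single p q s e : coprime p q -> (1 < p)%N -> (1 < q)%N -> p != q ->
  vl (rr p q) e = rr p q ^+ s -> size e = 1%N.
Proof.
move=> cop p1 q1 pq hv.
have r0 : 0 < rr p q by apply: rr_gt0; lia.
have rs0 : rr p q ^+ s != 0 by rewrite expf_neq0 // gt_eqF.
case: (ltngtP p q) => [lt|gt|eq]; last by rewrite eq eqxx in pq.
- have r1 : rr p q < 1 by rewrite /rr ltr_pdivrMr ?ltr0n ?mul1r ?ltr_nat //; lia.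
  have ks : forall k, k \in e -> (s <= k)%N.
    move=> k ke; rewrite leqNgt; apply/negP => ks.
    have := term_le_val (rr p q) e k (ltW r0) ke; rewrite hv.
    by rewrite leNgt ltr_iXn2l ?ks.
  have : vl (rr p q) (map (fun k => k - s)%N e) * rr p q ^+ s = vl (rr p q) e.
    by apply: vl_map_scale => k ke; rewrite -exprD subnK ?ks.
  rewrite hv -{2}[rr p q ^+ s]mul1r => /(mulIf rs0) h.
  by rewrite -(size_map (fun k => k - s)%N); apply: (vl_one p q) => //; lia.
- have r1 : 1 < rr p q by rewrite /rr ltr_pdivlMr ?ltr0n ?mul1r ?ltr_nat //; lia.
  have ks : forall k, k \in e -> (k <= s)%N.
    move=> k ke; rewrite leqNgt; apply/negP => ks.
    have := term_le_val (rr p q) e k (ltW r0) ke; rewrite hv.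
    by rewrite leNgt ltr_eXn2l ?ks.
  have : vl (rr q p) (map (fun k => s - k)%N e) * rr p q ^+ s = vl (rr p q) e.
    apply: vl_map_scale => k ke.
    have -> : rr p q ^+ s = rr p q ^+ (s - k) * rr p q ^+ k by rewrite -exprD subnK ?ks.
    rewrite mulrA -exprMn.
    have -> : rr q p * rr p q = 1.
      have p0 : (p%:R : rat) != 0 by rewrite pnatr_eq0; lia.
      have q0 : (q%:R : rat) != 0 by rewrite pnatr_eq0; lia.
      rewrite /rr; field; by rewrite p0 q0.
    by rewrite expr1n mul1r.
  rewrite hv -{2}[rr p q ^+ s]mul1r => /(mulIf rs0) h.
  rewrite -(size_map (fun k => s - k)%N); apply: (vl_one q p) => //; last lia.
  by rewrite coprime_sym.
Qed.

Lemma S_vl r N x : S_rN r N x <-> exists s, all N s /\ x = vl r s.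
Proof.
split.
  by move=> [s [hs ->]]; exists s; split => //; apply/allP.
by move=> [s [/allP hs ->]]; exists s.
Qed.

Lemma atom_iff p q (N : pred nat) a :
  coprime p q -> (1 < p)%N -> (1 < q)%N -> p != q ->
  (is_atom (S_rN (rr p q) N) a <-> exists s, N s /\ a = rr p q ^+ s).
Proof.
move=> cop p1 q1 pq.
have r0 : 0 < rr p q by apply: rr_gt0; lia.
split.
  move=> [/S_vl [s [hs ->]] a0 H].
  case: s hs a0 H => [|k s] hs a0 H; first by rewrite /vl big_nil eqxx in a0.
  case/andP: hs => Nk hs.
  case: s hs a0 H => [|k' s] hs a0 H.
    by exists k; split => //; rewrite vl_cons /vl big_nil addr0.
  have := H (rr p q ^+ k) (vl (rr p q) (k' :: s)).
  case.
  - by apply/S_vl; exists [:: k]; rewrite /= Nk /vl big_cons big_nil addr0.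
  - by apply/S_vl; exists (k' :: s); split.
  - by rewrite vl_cons.
  - by move/eqP; rewrite expf_eq0 gt_eqF ?andbF.
  - by move=> h; have := vl_gt0 (rr p q) (k' :: s) r0 isT; rewrite h ltxx.
move=> [s [Ns ->]]; split.
- by apply/S_vl; exists [:: s]; rewrite /= Ns /vl big_cons big_nil addr0.
- by rewrite expf_eq0 gt_eqF ?andbF.
move=> b c /S_vl [e1 [_ ->]] /S_vl [e2 [_ ->]] h.
have := vl_single p q s (e1 ++ e2) cop p1 q1 pq; rewrite vl_cat -h => /(_ erefl).
rewrite size_cat; clear h.
case: e1 => [|k1 e1]; first by left; rewrite /vl big_nil.
case: e2 => [|k2 e2]; first by right; rewrite /vl big_nil.
by rewrite /= addnS.
Qed.

Lemma lengths_iff p q (N : pred nat) x z :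
  coprime p q -> (1 < p)%N -> (1 < q)%N -> p != q ->
  (lengths (S_rN (rr p q) N) x z <-> Lz (Lf p q N x) z).
Proof.
move=> cop p1 q1 pq; split.
  move=> [s [hs hx hz]].
  suff : exists e, all N e /\ \sum_(a <- s) a = vl (rr p q) e /\ size e = size s.
    by case=> e [he [hv hse]]; exists (size s); split => //; exists e; split => //; split => //; rewrite hx.
  elim: s hs {hx hz} => [|a s IH] hs; first by exists [::]; rewrite /vl !big_nil.
  have [k [Nk ->]] : exists k, N k /\ a = rr p q ^+ k.
    by apply/(atom_iff p q N a cop p1 q1 pq); apply: hs; rewrite inE eqxx.
  case: IH => [b bs|e [he [hv hse]]]; first by apply: hs; rewrite inE bs orbT.
  by exists (k :: e); rewrite /= Nk he big_cons hv vl_cons hse.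
move=> [l [-> [e [[he hx] <-]]]].
exists (map (fun k => rr p q ^+ k) e); split.
- move=> a /mapP [k ke ->]; apply/(atom_iff p q N _ cop p1 q1 pq).
  by exists k; split => //; move/allP: he; apply.
- by rewrite hx /vl big_map.
- by rewrite size_map.
Qed.

Lemma AAP_ext d B (L L' : int -> Prop) :
  (forall z, L z <-> L' z) -> AAP d B L' -> AAP d B L.
Proof.
move=> H [y [Lp [Lpp [ls [h1 h2 h3 h4]]]]].
exists y, Lp, Lpp, ls; split => //.
- by move=> z; rewrite H.
- by move=> z /H; apply: h2.
Qed.

Lemma dvd_abs (m n : int) : (m %| n)%Z -> ((`|m|%N)%:Z %| n)%Z.
Proof. by rewrite !dvdzE. Qed.

Lemma main_gen p q (N : pred nat) c x :
  coprime p q -> (1 < p)%N -> (1 < q)%N -> p != q -> N 0%N ->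
  (forall n, (c <= n)%N -> N n) -> S_rN (rr p q) N x ->
  AAP `|p%:Z - q%:Z|%N (Bb p q c) (lengths (S_rN (rr p q) N) x).
Proof.
move=> cop p1 q1 pq N0 hN /S_vl [s [hs hx]].
apply: (AAP_ext _ _ _ (Lz (Lf p q N x))); first by move=> z; apply: lengths_iff.
have ex : exists l, Lf p q N x l by exists (size s), s.
have cg : forall a b, Lf p q N x a -> Lf p q N x b ->
    ((`|p%:Z - q%:Z|%N)%:Z %| a%:Z - b%:Z)%Z.
  move=> a b [e [[_ he] <-]] [e' [[_ he'] <-]]; apply: dvd_abs.
  by apply: (cong p q e e' cop) => //; [lia | rewrite -he -he'].
case: (ltngtP p q) => [lt|gt|eq]; last by rewrite eq eqxx in pq.
- have hd : `|p%:Z - q%:Z|%N = (q - p)%N by lia.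
  rewrite hd in cg *.
  have [lmin [Lm [Hm st]]] := struct_lt p q N c x cop ltac:(lia) lt N0 hN ex.
  by apply: (aap_lt _ _ _ lmin) => //; lia.
- have hd : `|p%:Z - q%:Z|%N = (p - q)%N by lia.
  rewrite hd in cg *.
  have [lmax [Lm [Hm st]]] := struct_gt p q N c x cop ltac:(lia) gt N0 hN ex.
  have [lmin [Ln Hn]] := min_nat _ ex.
  by apply: (aap_gt _ _ _ lmin lmax) => //; lia.
Qed.

Lemma vl_nat p s : vl (rr p 1) s = (\sum_(k <- s) p ^ k)%N%:R.
Proof. by rewrite /vl natr_sum /rr divr1; apply: eq_bigr => k _; rewrite natrX. Qed.

Lemma S_nat p N b : S_rN (rr p 1) N b -> exists B : nat, b = B%:R.
Proof. by move=> /S_vl [s [_ ->]]; eexists; apply: vl_nat. Qed.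

Lemma S_natall p (N : pred nat) B : N 0%N -> S_rN (rr p 1) N B%:R.
Proof.
move=> N0; apply/S_vl; exists (nseq B 0%N); split.
  by apply/allP => y; rewrite mem_nseq => /andP [_ /eqP ->].
by rewrite vl_nseq expr0 mulr1.
Qed.

Lemma atom1 p (N : pred nat) a : N 0%N ->
  is_atom (S_rN (rr p 1) N) a <-> a = 1.
Proof.
move=> N0; split.
  move=> [Sa a0 H]; have [A hA] := S_nat p N a Sa; subst a.
  have A0 : (A != 0)%N by move: a0; rewrite pnatr_eq0.
  case: (ltngtP A 1) => [lt|gt|->] //; first by lia.
  have e : (A%:R : rat) = 1 + (A - 1)%N%:R.
    by rewrite -[in LHS](subnKC (ltnW gt)) natrD mulr1n.
  have := H 1 (A - 1)%N%:R (S_natall p N 1 N0) (S_natall p N _ N0) e.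
  case=> /eqP; rewrite ?oner_eq0 // pnatr_eq0; lia.
move=> ->; split; first exact: (S_natall p N 1 N0).
  exact: oner_neq0.
move=> b c /(S_nat p) [B ->] /(S_nat p) [C ->] /eqP.
rewrite -natrD eq_sym pnatr_eq1 => /eqP h.
case: B h => [|B] h; first by left.
right; have -> : C = 0%N by lia.
by [].
Qed.

Lemma case_q1 p (N : pred nat) x : N 0%N -> S_rN (rr p 1) N x ->
  AAP `|p%:Z - 1%:Z|%N 0 (lengths (S_rN (rr p 1) N) x).
Proof.
move=> N0 Sx; have [X hX] := S_nat p N x Sx.
have Lchar : forall z, lengths (S_rN (rr p 1) N) x z <-> z = X%:Z.
  move=> z; split.
    move=> [s [hs hx ->]].
    have : \sum_(a <- s) a = (size s)%:R.
      elim: s hs {hx} => [|a s IH] hs; first by rewrite big_nil.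
      rewrite big_cons IH; last by move=> b bs; apply: hs; rewrite inE bs orbT.
      have := hs a; rewrite inE eqxx => /(_ isT) /(atom1 p N a N0) ->.
      by rewrite /= -add1n natrD.
    rewrite -hx hX => /eqP; rewrite eqr_nat => /eqP ->; by [].
  move=> ->; exists (nseq X 1); split.
  - by move=> a; rewrite mem_nseq => /andP [_ /eqP ->]; apply/(atom1 p N 1 N0).
  - by rewrite hX big_nseq iter_addr_0.
  - by rewrite size_nseq.
exists X%:Z, (fun _ => False), (fun _ => False), (Some 0%N); split.
- move=> z; rewrite Lchar; split.
    by move=> ->; right; left; exists 0%N; split => //; rewrite subrr.
  case=> [//|[[j [j0 hj]]|//]]; move: j0 hj; rewrite leqn0 => /eqP -> /eqP.
  by rewrite mul0n subr_eq0 => /eqP.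
- by move=> z /Lchar ->; rewrite subrr dvdz0.
- by [].
- by [].
Qed.

Lemma case_p1 q (N : pred nat) c : (1 < q)%N -> N 0%N ->
  (forall n, (c <= n)%N -> N n) -> ~ atomic (S_rN (rr 1 q) N).
Proof.
move=> q1 N0 hN at1.
have S1 : S_rN (rr 1 q) N 1.
  by apply/S_vl; exists [:: 0%N]; rewrite /= N0 /vl big_cons big_nil expr0 addr0.
have [s [hs hsum]] := at1 1 S1 (oner_neq0 _).
case: s hs hsum => [|a s] hs hsum; first by move: hsum; rewrite big_nil => /eqP; rewrite oner_eq0.
have [Sa a0 H] := hs a (mem_head _ _).
have [e [he ha]] := (S_vl _ _ _).1 Sa.
have r0 : 0 < rr 1 q by apply: rr_gt0; lia.
case: e he ha => [|k e] he ha; first by rewrite ha /vl big_nil eqxx in a0.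
set m := c.+1.
have Nkm : N (k + m)%N by apply: hN; lia.
have qm : (2 <= q ^ m)%N.
  have : (q ^ 1 <= q ^ m)%N by rewrite leq_pexp2l; lia.
  by rewrite expn1; lia.
have := H (rr 1 q ^+ (k + m)%N) (vl (rr 1 q) (nseq (q ^ m - 1) (k + m)%N ++ e)).
case.
- by apply/S_vl; exists [:: (k + m)%N]; rewrite /= Nkm /vl big_cons big_nil addr0.
- apply/S_vl; exists (nseq (q ^ m - 1) (k + m)%N ++ e); split => //.
  rewrite all_cat; apply/andP; split; last by case/andP: he.
  by apply/allP => y; rewrite mem_nseq => /andP [_ /eqP ->].
- rewrite ha vl_cons vl_cat vl_nseq addrA; congr (_ + _).
  rewrite natrB ?(leq_trans _ qm) // mulrBl mul1r addrC subrK natrX.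
  have := rrXq 1 q m ltac:(lia); rewrite expr1n => h.
  by rewrite exprD mulrCA [_ * rr 1 q ^+ m]mulrC h mulr1.
- by move/eqP; rewrite expf_eq0 gt_eqF ?andbF.
- move=> h.
  have : 0 < vl (rr 1 q) (nseq (q ^ m - 1) (k + m)%N ++ e).
    apply: vl_gt0 => //; case E : (q ^ m - 1)%N => [|n]; first by lia.
    by [].
  by rewrite h ltxx.
Qed.

Theorem mainTheorem3 (r : rat) (N : pred nat) :
  numerical_monoid N -> 0 < r -> r != 1 -> atomic (S_rN r N) ->
  exists B : nat, forall x : rat, S_rN r N x ->
    AAP `|numq r - denq r|%N B (lengths (S_rN r N) x).
Proof.
move=> [N0 _ [c hc]] r0 r1 at1.
have [p [q [hn hd]]] : exists p q : nat, numq r = p%:Z /\ denq r = q%:Z.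
  exists `|numq r|%N, `|denq r|%N; split; rewrite abszE ger0_norm //; apply: ltW.
    by rewrite numq_gt0.
have cop : coprime p q by have := coprime_num_den r; rewrite hn hd.
have hp : (0 < p)%N by have := numq_gt0 r; rewrite r0 hn ltz_nat.
have hq : (0 < q)%N by have := denq_gt0 r; rewrite hd ltz_nat.
have hr : r = rr p q by rewrite -[r]divq_num_den hn hd.
rewrite hn hd; clear hn hd; subst r.
case: (eqVneq q 1%N) => [q1|q1].
  subst q; exists 0%N => x Sx; exact: case_q1.
case: (eqVneq p 1%N) => [p1|p1].
  subst p; exfalso; apply: (case_p1 q N c) => //; lia.
have pq : p != q.
  apply/negP => /eqP E; subst q; move: r1; rewrite /rr divff ?eqxx //.
  by rewrite pnatr_eq0; lia.
exists (Bb p q c) => x Sx; apply: main_gen => //; lia.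
Qed.
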